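(* For every operator $\mathtt P\in\partial_z+z^{-1}\mathcal D_-$, the equation $\mathtt P\cdot\Psi=0$ has, up to multiplication by a constant, exactly one nonzero solution $\Psi\in H$, and this solution can be normalized so that $\Psi\in1+H_-$. In particular, for $\mathcal W\in{\rm Gr}^{(0)}_+$ the equation $\mathtt P_{\mathcal W}\cdot\Psi=0$ has a unique solution in $1+H_-$, namely the wave function of $\mathcal W$ (the unique element of $\mathcal W\cap(1+H_-)$).
   Context: $H_+=\mathbb C[z]$, $H_-=z^{-1}\mathbb C[[z^{-1}]]$, $H=H_+\oplus H_-$. ${\rm Gr}^{(0)}_+$ is the set of closed subspaces $\mathcal W\subset H$ with $\pi_+:\mathcal W\to H_+$ (projection along $H_-$) an isomorphism. $\mathcal D=\mathbb C((z^{-1}))[[\partial_z]]$ is the ring of differential operators $\sum_{m\ge0}a_m(z)\partial_z^m$, $a_m\in H$, acting on $H$; $\mathcal D_\pm=H_\pm[[\partial_z]]$. For $\mathcal W\in{\rm Gr}^{(0)}_+$ let $\mathtt G_{\mathcal W}$ be the unique element of $\{\mathtt G\in\mathcal D:\mathtt G-1\in\mathcal D_-\}$ with $\mathcal W=\mathtt G_{\mathcal W}\cdot H_+$ (Sato's theorem), and $\mathtt P_{\mathcal W}:=\mathtt G_{\mathcal W}\partial_z\mathtt G_{\mathcal W}^{-1}$. *)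

(* Defs.v *)
From mathcomp Require Import all_boot all_algebra.
From mathcomp Require Import boolp classical_sets fsbigop.
Set Implicit Arguments. Unset Strict Implicit. Unset Printing Implicit Defensive.
Import GRing.Theory Num.Theory.
Local Open Scope ring_scope.

Section Defs.
Variable K : fieldType.

(* An element of H = C((z^{-1})) is given by its coefficient sequence:
   f n = coefficient of z^n. *)
Definition ser := int -> K.

Definition inH (f : ser) : Prop := exists N : int, forall n : int, N < n -> f n = 0.
Definition inHplus (f : ser) : Prop := inH f /\ forall n : int, n < 0 -> f n = 0.
Definition inHminus (f : ser) : Prop := forall n : int, 0 <= n -> f n = 0.
Definition inzHminus (f : ser) : Prop := forall n : int, -1 <= n -> f n = 0.
Definition inOnePlusHminus (f : ser) : Prop := f 0 = 1 /\ forall n : int, 0 < n -> f n = 0.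

Definition scst (c : K) : ser := fun n => if n == 0 then c else 0.
Definition sadd (f g : ser) : ser := fun n => f n + g n.
Definition ssub (f g : ser) : ser := fun n => f n - g n.
Definition sscale (c : K) (f : ser) : ser := fun n => c * f n.
Definition piplus (f : ser) : ser := fun n => if 0 <= n then f n else 0.
(* d/dz (z^{n+1}) = (n+1) z^n *)
Definition dz (f : ser) : ser := fun n => (n + 1)%:~R * f (n + 1).
Definition dzn (m : nat) (f : ser) : ser := iter m dz f.
(* product of Laurent series (a finitely supported sum for f, g in H) *)
Definition smul (f g : ser) : ser :=
  fun n => \sum_(i \in [set: int]) (f i * g (n - i)).

(* A differential operator sum_m a_m(z) d_z^m is given by m |-> a_m. *)
Definition op := nat -> ser.
Definition inD (P : op) : Prop := forall m, inH (P m).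
Definition inDminus (P : op) : Prop := forall m, inHminus (P m).
Definition opone : op := fun m => if m == 0%N then scst 1 else scst 0.
Definition opdz : op := fun m => if m == 1%N then scst 1 else scst 0.
Definition opsub (P Q : op) : op := fun m => ssub (P m) (Q m).

Definition act (P : op) (f : ser) : ser :=
  fun j => \sum_(m \in [set: nat]) smul (P m) (dzn m f) j.

(* Composition in D, by the Leibniz rule
   (a d^m)(b d^n) = sum_k binom(m,k) a b^{(k)} d^{m-k+n}. *)
Definition comp (A B : op) : op :=
  fun r j => \sum_(p \in [set: nat * nat])
     (let m := p.1 in let n := p.2 in
      if (n <= r)%N && (r <= m + n)%N then
        'C(m, m + n - r)%:R * smul (A m) (dzn (m + n - r) (B n)) j
      else 0).

Definition inDzPlusZinvDminus (P : op) : Prop :=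
  forall m, inzHminus (opsub P opdz m).
Definition inOnePlusDminus (G : op) : Prop := inDminus (opsub G opone).

(* Gr^{(0)}_+ : closed subspaces W of H (closed for the z^{-1}-adic topology)
   such that pi_+ : W -> H_+ is a (linear) isomorphism. *)
Definition adic_closed (W : ser -> Prop) : Prop :=
  forall f : ser, inH f ->
    (forall k : nat, exists w, W w /\ forall n : int, - (k%:Z) < n -> f n = w n) ->
    W f.
Definition inGr0plus (W : ser -> Prop) : Prop :=
  (forall w, W w -> inH w) /\
  W (scst 0) /\
  (forall v w, W v -> W w -> W (sadd v w)) /\
  (forall c w, W w -> W (sscale c w)) /\
  adic_closed W /\
  (forall h, inHplus h -> exists w, W w /\ piplus w = h /\
         forall w', W w' -> piplus w' = h -> w' = w).

Definition isSatoOp (W : ser -> Prop) (G : op) : Prop :=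
  inOnePlusDminus G /\
  forall w, W w <-> exists h, inHplus h /\ w = act G h.

(* P = P_W = G_W d_z G_W^{-1} (the inverse of G_W in D also lies in 1 + D_-). *)
Definition isPW (W : ser -> Prop) (P : op) : Prop :=
  exists G Gi, [/\ isSatoOp W G, inOnePlusDminus Gi,
                   comp G Gi = opone, comp Gi G = opone &
                   P = comp (comp G opdz) Gi].

End Defs.

(* Main.v *)
Require Import Defs.
From mathcomp Require Import all_boot all_algebra.
From mathcomp Require Import reals complex.
From mathcomp Require Import boolp classical_sets fsbigop.
From mathcomp Require Import zify ring lra.
Set Implicit Arguments. Unset Strict Implicit. Unset Printing Implicit Defensive.
Import GRing.Theory Num.Theory.
Local Open Scope classical_set_scope.
Local Open Scope ring_scope.

Section Lib.
Variable K : numFieldType.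

Definition zrange (lo : int) (n : nat) : seq int := [seq lo + (i%:Z) | i <- iota 0 n].

Lemma mem_zrange lo n x : (x \in zrange lo n) = (lo <= x) && (x < lo + n%:Z).
Proof.
apply/mapP/idP.
  case=> i; rewrite mem_iota => /andP[_ hi] ->; apply/andP; split; lia.
move=> /andP[h1 h2]; exists (absz (x - lo)); last by lia.
rewrite mem_iota; lia.
Qed.

Lemma uniq_zrange lo n : uniq (zrange lo n).
Proof.
rewrite map_inj_uniq ?iota_uniq // => a b /= h; lia.
Qed.

Lemma fsumZ (F : int -> K) lo n :
  (forall x, (x < lo) || (lo + n%:Z <= x) -> F x = 0) ->
  \sum_(x \in [set: int]) F x = \sum_(x <- zrange lo n) F x.
Proof.
move=> h; rewrite (fsbigE (zrange lo n)) ?uniq_zrange //.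
- by apply: eq_bigl => x; rewrite mem_setT.
- move=> x _; rewrite mem_zrange => hx; apply: h; lia.
Qed.

Lemma fsumN (F : nat -> K) n :
  (forall m, (n <= m)%N -> F m = 0) ->
  \sum_(m \in [set: nat]) F m = \sum_(m < n) F m.
Proof.
move=> h; rewrite (fsbigE (iota 0 n)) ?iota_uniq //.
- rewrite -(big_mkord xpredT) /index_iota subn0.
  by apply: eq_bigl => x; rewrite mem_setT.
- move=> x _; rewrite mem_iota => hx; apply: h; lia.
Qed.

Lemma fsumNN (F : nat * nat -> K) a b :
  (forall m n, ~~ ((m < a) && (n < b))%N -> F (m, n) = 0) ->
  \sum_(p \in [set: nat * nat]) F p = \sum_(m < a) \sum_(n < b) F (m : nat, n : nat).
Proof.
move=> h; rewrite (fsbigE [seq (x, y) | x <- iota 0 a, y <- iota 0 b]).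
- rewrite big_seq_cond.
  rewrite (eq_bigl (fun p => p \in [seq (x, y) | x <- iota 0 a, y <- iota 0 b])); last first.
    by move=> x; rewrite mem_setT andbT.
  rewrite -big_seq big_allpairs.
  rewrite -(big_mkord xpredT (fun m => \sum_(n < b) F (m, n : nat))) /index_iota subn0.
  by apply: eq_bigr => m _; rewrite -(big_mkord xpredT (fun n => F (m, n))) /index_iota subn0.
- apply: allpairs_uniq; rewrite ?iota_uniq //.
  by move=> [x1 y1] [x2 y2] _ _ /= [-> ->].
- by [].
- move=> [m n] _ hp; apply: h; apply/negP => /andP[h1 h2]; move/negP: hp; apply.
  by apply/allpairsP; exists (m, n); rewrite !mem_iota /=; split => //; lia.
Qed.


Definition D (x : int) (k : nat) : K := \prod_(i < k) ((x - i%:Z)%:~R : K).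

Lemma D0 x : D x 0 = 1.
Proof. by rewrite /D big_ord0. Qed.

Lemma DS x k : D x k.+1 = D x k * (x - k%:Z)%:~R.
Proof. by rewrite /D big_ord_recr. Qed.

Lemma Dsplit x a b : D x (a + b) = D x a * D (x - a%:Z) b.
Proof.
rewrite /D big_split_ord /=; congr (_ * _); apply: eq_bigr => i _.
by congr (_%:~R); rewrite /=; lia.
Qed.

Lemma Dvanish x k : (0 <= x) -> (x < k%:Z) -> D x k = 0.
Proof.
move=> h1 h2; have hk : (absz x < k)%N by lia.
rewrite /D (bigD1 (Ordinal hk)) //=.
by rewrite (_ : x - _ = 0) ?mul0r //; lia.
Qed.

Lemma dznE (f : ser K) m q : dzn m f q = D (q + m%:Z) m * f (q + m%:Z).
Proof.
elim: m q => [|m IH] q.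
  by rewrite /dzn /= D0 mul1r addr0.
rewrite /dzn iterS -/(dzn m f) /dz IH DS.
rewrite (_ : q + 1 + m%:Z = q + m.+1%:Z); last by lia.
rewrite (_ : q + m.+1%:Z - m%:Z = q + 1); last by lia.
by rewrite mulrA [X in X * _]mulrC.
Qed.

Lemma vandermonde x y m :
  D (x + y) m = \sum_(k < m.+1) 'C(m, k)%:R * D x k * D y (m - k).
Proof.
elim: m => [|m IH].
  by rewrite big_ord1 !D0 bin0 !mul1r.
rewrite DS IH big_distrl /=.
have E : forall k : 'I_m.+1, 'C(m, k)%:R * D x k * D y (m - k) * (x + y - m%:Z)%:~R
   = 'C(m, k)%:R * D x k.+1 * D y (m - k) + 'C(m, k)%:R * D x k * D y (m.+1 - k).
  move=> k; have hk := ltn_ord k.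
  rewrite DS (_ : (m.+1 - k = (m - k).+1)%N); last by lia.
  rewrite DS (_ : x + y - m%:Z = (x - k%:Z) + (y - (m - k)%N%:Z)); last by lia.
  rewrite intrD; ring.
rewrite (eq_bigr _ (fun k _ => E k)) big_split /=.
rewrite [in RHS]big_ord_recl /=.
rewrite [X in _ = _ + X](_ : _ = \sum_(i < m.+1) 'C(m, i)%:R * D x i.+1 * D y (m - i)
   + \sum_(i < m.+1) 'C(m, i.+1)%:R * D x i.+1 * D y (m - i)); last first.
  rewrite -big_split /=; apply: eq_bigr => i _.
  by rewrite binS natrD subSS; ring.
rewrite addrCA; congr (_ + _).
rewrite big_ord_recl /= [in RHS]big_ord_recr /= !bin0 (bin_small (ltnSn m)) mul0r mul0r addr0.
congr (_ + _); apply: eq_bigr => i _; by rewrite /bump /= add1n subSS.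
Qed.


Definition nonpos (A : op K) := forall m l, 0 < l -> A m l = 0.
Definition bnd (f : ser K) (N : int) := forall p, N < p -> f p = 0.

Lemma smul_dznE (a g : ser K) k l :
  smul a (dzn k g) l = \sum_(s \in [set: int]) a (l + k%:Z - s) * (D s k * g s).
Proof.
rewrite /smul (reindex_fsbigT (fun s => l + k%:Z - s)).
  apply: eq_fsbigr => s _; rewrite dznE.
  by rewrite (_ : l - (l + k%:Z - s) + k%:Z = s) //; lia.
by exists (fun s => l + k%:Z - s) => s /=; lia.
Qed.

Lemma actE (A : op K) f j :
  act A f j = \sum_(m \in [set: nat]) \sum_(s \in [set: int]) A m (j + m%:Z - s) * (D s m * f s).
Proof. by rewrite /act; apply: eq_fsbigr => m _; rewrite smul_dznE. Qed.

Lemma act_bnd A f N : nonpos A -> bnd f N -> bnd (act A f) N.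
Proof.
move=> hA hf j hj; rewrite actE fsbig1 // => m _; rewrite fsbig1 // => s _.
have [hs|hs] := ltrP N s; first by rewrite hf // !mulr0.
by rewrite hA ?mul0r //; lia.
Qed.

Lemma actF A f N j M lo n : nonpos A -> bnd f N -> N < j + M%:Z -> lo <= j ->
  N < lo + n%:Z ->
  act A f j = \sum_(m < M) \sum_(s <- zrange lo n) A m (j + m%:Z - s) * (D s m * f s).
Proof.
move=> hA hf h1 h2 h3; rewrite actE (fsumN (n:=M)).
  apply: eq_bigr => m _; rewrite (fsumZ (lo:=lo) (n:=n)) // => x hx.
  have [hs|hs] := ltrP N x; first by rewrite hf // !mulr0.
  by rewrite hA ?mul0r //; lia.
move=> m hm; rewrite fsbig1 // => s _.
have [hs|hs] := ltrP N s; first by rewrite hf // !mulr0.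
by rewrite hA ?mul0r //; lia.
Qed.

Lemma act_scale (A : op K) (c : K) (f : ser K) j : act A (sscale c f) j = c * act A f j.
Proof.
rewrite !actE mulr_fsumr; apply: eq_fsbigr => m _.
rewrite mulr_fsumr; apply: eq_fsbigr => s _; rewrite /sscale; ring.
Qed.

Lemma act_zero (A : op K) (f : ser K) j : (forall p, f p = 0) -> act A f j = 0.
Proof.
move=> h; rewrite actE fsbig1 // => m _; rewrite fsbig1 // => s _.
by rewrite h !mulr0.
Qed.

Lemma sum_pick (r : seq int) i (F : int -> K) : uniq r -> i \in r ->
  \sum_(x <- r) (if x == i then F x else 0) = F i.
Proof.
move=> u hi; rewrite (bigD1_seq i) //= eqxx big1 ?addr0 // => x /negPf ->; done.
Qed.

Lemma act_opone (f : ser K) : act (opone K) f = f.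
Proof.
apply/funext => j; rewrite actE (fsumN (n:=1)).
  rewrite big_ord1 (fsumZ (lo:=j) (n:=1)).
    by rewrite /zrange /= big_seq1 /opone /= /scst subrr eqxx D0 !mul1r; congr (f _); lia.
  move=> x hx; rewrite /opone /= /scst ifF ?mul0r //; apply/negbTE; lia.
move=> m hm; rewrite fsbig1 // => s _.
by rewrite /opone ifF ?mul0r ?/scst; [case: ifP|]; rewrite ?mul0r //; apply/negbTE; lia.
Qed.

Lemma act_opdz (f : ser K) : act (opdz K) f = dz f.
Proof.
apply/funext => j; rewrite actE (fsumN (n:=2)).
  rewrite big_ord_recl big_ord1 /= fsbig1; last first.
    by move=> s _; rewrite /opdz /= /scst; case: ifP; rewrite mul0r.
  rewrite add0r (fsumZ (lo:=j + 1) (n:=1)).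
    rewrite /zrange /= big_seq1 /opdz /= /scst.
    have -> : bump 0 0 = 1%N by [].
    have -> : j + 1%N%:Z - (j + 1 + 0%Z) = 0 by lia.
    have -> : j + 1 + 0%Z = j + 1 by lia.
    rewrite eqxx mul1r /dz /D big_ord1 /=.
    by have -> : j + 1 - 0%N%:Z = j + 1 by lia.
  move=> x hx; rewrite /opdz /bump /= /scst ifF ?mul0r //; apply/negbTE; lia.
move=> m hm; rewrite fsbig1 // => s _.
by rewrite /opdz ifF ?mul0r ?/scst; [case: ifP|]; rewrite ?mul0r //; apply/negbTE; lia.
Qed.


Lemma comp_nonpos (A B : op K) : nonpos A -> nonpos B -> nonpos (Defs.comp A B).
Proof.
move=> hA hB r l hl; rewrite /Defs.comp fsbig1 // => -[m n] _ /=.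
case: ifP => // _; rewrite smul_dznE fsbig1 ?mulr0 // => s _.
have [hs|hs] := ltrP 0 s; first by rewrite hB // !mulr0.
by rewrite hA ?mul0r //; lia.
Qed.

Lemma compF (A B : op K) r l M lo w : nonpos A -> nonpos B -> (r < M)%N -> lo <= l ->
  0 < lo + w%:Z -> r%:Z <= l + M%:Z ->
  Defs.comp A B r l = \sum_(m < M) \sum_(n < M)
    (if (n <= r)%N && (r <= m + n)%N then 'C(m, m + n - r)%:R *
       \sum_(s <- zrange lo w) A m (l + (m + n - r)%N%:Z - s) * (D s (m + n - r) * B n s)
     else 0).
Proof.
move=> hA hB h1 h2 h3 h4; rewrite /Defs.comp (fsumNN (a:=M) (b:=M)).
  apply: eq_bigr => m _; apply: eq_bigr => n _ /=.
  case: ifP => // _; rewrite smul_dznE (fsumZ (lo:=lo) (n:=w)) // => x hx.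
  have [hs|hs] := ltrP 0 x; first by rewrite hB // !mulr0.
  by rewrite hA ?mul0r //; lia.
move=> m n hmn /=; case: ifP => // /andP[c1 c2].
rewrite smul_dznE fsbig1 ?mulr0 // => s _.
have [hs|hs] := ltrP s (l + (m + n - r)%N%:Z).
  by rewrite hA ?mul0r //; lia.
have [hs2|hs2] := ltrP 0 s; first by rewrite hB // !mulr0.
by rewrite Dvanish ?mul0r ?mulr0 //; lia.
Qed.

Lemma sum_ord_nat (F : nat -> K) M : \sum_(r < M) F r = \sum_(0 <= r < M) F r.
Proof. by rewrite big_mkord. Qed.

Lemma comb m n s q M : (m + n < M)%N ->
  \sum_(r < M) (if (n <= r)%N && (r <= m + n)%N then
       'C(m, m + n - r)%:R * D s (m + n - r) * D q r else 0)
  = D q n * D (s + q - n%:Z) m.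
Proof.
move=> hM.
rewrite (sum_ord_nat (fun r => if (n <= r)%N && (r <= m + n)%N then
       'C(m, m + n - r)%:R * D s (m + n - r) * D q r else 0)).
rewrite (big_cat_nat _ (n := n)) //=; last by lia.
rewrite big_nat_cond big1 ?add0r; last first.
  by move=> r /andP[/andP[_ hr] _]; rewrite ifF //; apply/negbTE; lia.
rewrite (big_cat_nat _ (n := (m + n).+1)) //=; last by lia.
rewrite [X in _ + X]big_nat_cond [X in _ + X]big1 ?addr0; last first.
  by move=> r /andP[/andP[hr _] _]; rewrite ifF //; apply/negbTE; lia.
rewrite -{1}(add0n n) big_addn.
rewrite (_ : ((m + n).+1 - n = m.+1)%N); last by lia.
rewrite (_ : s + q - n%:Z = (q - n%:Z) + s); last by lia.
rewrite vandermonde big_distrr big_mkord /=; apply: eq_bigr => i _.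
have hi := ltn_ord i.
rewrite ifT; last by apply/andP; split; lia.
rewrite (_ : (m + n - (i + n) = m - i)%N); last by lia.
rewrite (_ : (i + n = n + i)%N); last by lia.
by rewrite Dsplit bin_sub; [ring|lia].
Qed.


Lemma reorder1 (I1 I2 I3 I4 : Type) (r1 : seq I1) (r2 : seq I2) (r3 : seq I3) (r4 : seq I4)
  (F : I1 -> I2 -> I3 -> I4 -> K) :
  \sum_(a <- r1) \sum_(b <- r2) \sum_(c <- r3) \sum_(d <- r4) F a b c d =
  \sum_(c <- r3) \sum_(d <- r4) \sum_(b <- r2) \sum_(a <- r1) F a b c d.
Proof.
rewrite exchange_big /=.
transitivity (\sum_(b <- r2) \sum_(c <- r3) \sum_(d <- r4) \sum_(a <- r1) F a b c d).
  apply: eq_bigr => b _; rewrite exchange_big /=; apply: eq_bigr => c _.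
  by rewrite exchange_big.
rewrite exchange_big /=; apply: eq_bigr => c _; by rewrite exchange_big.
Qed.

Lemma reorder2 (I1 I2 I3 I4 : Type) (r1 : seq I1) (r2 : seq I2) (r3 : seq I3) (r4 : seq I4)
  (F : I1 -> I2 -> I3 -> I4 -> K) :
  \sum_(a <- r1) \sum_(b <- r2) \sum_(c <- r3) \sum_(d <- r4) F a b c d =
  \sum_(a <- r1) \sum_(c <- r3) \sum_(d <- r4) \sum_(b <- r2) F a b c d.
Proof.
apply: eq_bigr => a _; rewrite exchange_big /=; apply: eq_bigr => c _.
by rewrite exchange_big.
Qed.

Lemma act_comp (A B : op K) (f : ser K) N : nonpos A -> nonpos B -> bnd f N ->
  act (Defs.comp A B) f = act A (act B f).
Proof.
move=> hA hB hf; apply/funext => j.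
pose L := (absz j + absz N + 1)%N.
pose M := (5 * L)%N.
have hAB := comp_nonpos hA hB.
have hBf := act_bnd hB hf.
rewrite (actF (N:=N) (M:=M) (lo:=j) (n:=(2*L).+1)) //; try lia.
rewrite (actF (N:=N) (M:=M) (lo:=j) (n:=(2*L).+1)) //; try lia.
pose Q := zrange j (2 * L).+1.
pose S := zrange (- (2 * L)%N%:Z) (2 * L).+1.
transitivity (\sum_(m < M) \sum_(n < M) \sum_(q <- Q) \sum_(r < M)
   (if (n <= r)%N && (r <= m + n)%N then 'C(m, m + n - r)%:R *
       \sum_(s <- S) A m ((j + r%:Z - q) + (m + n - r)%N%:Z - s) * (D s (m + n - r) * B n s)
     else 0) * (D q r * f q)).
  rewrite (eq_bigr (fun r : 'I_M => \sum_(q <- Q) \sum_(m < M) \sum_(n < M)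
   (if (n <= r)%N && (r <= m + n)%N then 'C(m, m + n - r)%:R *
       \sum_(s <- S) A m ((j + r%:Z - q) + (m + n - r)%N%:Z - s) * (D s (m + n - r) * B n s)
     else 0) * (D q r * f q))); last first.
    move=> r _; rewrite big_seq [RHS]big_seq; apply: eq_bigr => q; rewrite mem_zrange => hq.
    rewrite (compF (M:=M) (lo:= - (2 * L)%N%:Z) (w:=(2*L).+1)) //; try lia.
    rewrite big_distrl /=; apply: eq_bigr => m _; rewrite big_distrl //.
  by rewrite reorder1.
transitivity (\sum_(m < M) \sum_(n < M) \sum_(q <- Q) \sum_(p <- Q)
   A m (j + m%:Z - p) * (D p m * (B n (p + n%:Z - q) * (D q n * f q)))); last first.
  transitivity (\sum_(m < M) \sum_(p <- Q) \sum_(n < M) \sum_(q <- Q)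
   A m (j + m%:Z - p) * (D p m * (B n (p + n%:Z - q) * (D q n * f q)))).
    by rewrite [RHS]reorder2.
  apply: eq_bigr => m _.
  rewrite big_seq [RHS]big_seq; apply: eq_bigr => p; rewrite mem_zrange => hp.
  rewrite (actF (N:=N) (M:=M) (lo:=j) (n:=(2*L).+1)) //; try lia.
  rewrite big_distrr /= big_distrr /=; apply: eq_bigr => n _.
  rewrite big_distrr /= big_distrr /=; apply: eq_bigr => q _; ring.
apply: eq_bigr => m _; apply: eq_bigr => n _.
rewrite big_seq [RHS]big_seq; apply: eq_bigr => q; rewrite mem_zrange => hq.
have [hqN|hqN] := ltrP N q.
  rewrite hf // big1 ?big1_seq //; first by move=> p _; rewrite !mulr0.
  by move=> r _; rewrite !mulr0.
rewrite -(fsumZ (F := fun p => A m (j + m%:Z - p) * (D p m * (B n (p + n%:Z - q) * (D q n * f q))))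
   (lo:=j) (n:=(2*L).+1)); last first.
  move=> x hx /=.
  have [hx1|hx1] := ltrP x j; first by rewrite hA ?mul0r //; lia.
  by rewrite hB ?mul0r ?mulr0 //; lia.
rewrite (reindex_fsbigT (fun s => s + q - n%:Z)); last first.
  by exists (fun p => p - q + n%:Z) => x /=; lia.
rewrite (fsumZ (lo:= - (2*L)%N%:Z) (n:=(2*L).+1)); last first.
  move=> x hx /=.
  have [hx1|hx1] := ltrP 0 x; first by rewrite hB ?mul0r ?mulr0 //; lia.
  by rewrite hA ?mul0r //; lia.
rewrite (eq_bigr (fun r : 'I_M => \sum_(s <- S)
   (if (n <= r)%N && (r <= m + n)%N then 'C(m, m + n - r)%:R * D s (m + n - r) * D q r else 0)
     * (A m (j + m%:Z + n%:Z - q - s) * B n s * f q))); last first.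
  move=> r _; case: ifP => c.
    rewrite big_distrr big_distrl /=; apply: eq_bigr => s _.
    rewrite (_ : j + r%:Z - q + (m + n - r)%N%:Z - s = j + m%:Z + n%:Z - q - s); last by lia.
    ring.
  by rewrite mul0r big1 // => s _; rewrite mul0r.
rewrite exchange_big /=; apply: eq_bigr => s _.
rewrite -big_distrl /=.
rewrite (_ : j + m%:Z - (s + q - n%:Z) = j + m%:Z + n%:Z - q - s); last by lia.
rewrite (_ : s + q - n%:Z + n%:Z - q = s); last by lia.
have [hmn|hmn] := ltnP (m + n) M.
  rewrite comb //; rewrite (_ : s + q - n%:Z = s + q - n%:Z); last by [].
  ring.
have [hs|hs] := ltrP 0 s; first by rewrite hB //; ring.
rewrite hA; [ring|lia].
Qed.


Section Part1.
Variable P : op K.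
Hypothesis hP : inDzPlusZinvDminus P.

Lemma Pshape m l : -1 <= l -> P m l = if (m == 1%N) && (l == 0) then 1 else 0.
Proof.
move=> hl; have := hP m hl; rewrite /opsub /ssub /opdz /scst.
case: (m == 1%N) => /=; move/eqP; rewrite subr_eq0 => /eqP ->; by case: (l == 0).
Qed.

Lemma P_nonpos : nonpos P.
Proof. move=> m l hl; rewrite Pshape; last by lia. by rewrite ifF //; apply/negbTE; lia. Qed.

Definition trunc (f : ser K) (j : int) : ser K := fun p => if p <= j then 0 else f p.

Lemma trunc_bnd f N j : bnd f N -> bnd (trunc f j) N.
Proof. by move=> hf p hp; rewrite /trunc; case: ifP => // _; apply: hf. Qed.

Lemma key f N j : bnd f N ->
  act P f (j - 1) = j%:~R * f j + act P (trunc f j) (j - 1).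
Proof.
move=> hf; pose L := (absz (N - j) + 2)%N.
have hP0 := P_nonpos.
rewrite (actF (N:=N) (M:=L) (lo:=j-1) (n:=L)) //; try lia.
rewrite (actF (f := trunc f j) (N:=N) (M:=L) (lo:=j-1) (n:=L)) //; try lia; last exact: trunc_bnd.
have hj : j \in zrange (j - 1) L by rewrite mem_zrange; lia.
rewrite (eq_bigr (fun m : 'I_L =>
   \sum_(s <- zrange (j - 1) L) P m (j - 1 + m%:Z - s) * (D s m * trunc f j s) +
   \sum_(s <- zrange (j - 1) L) (if s == j then P m (j - 1 + m%:Z - s) * (D s m * f s) else 0))); last first.
  move=> m _; rewrite -big_split /=; apply: eq_bigr => s _.
  rewrite /trunc; case: eqP => [->|hsj]; first by rewrite ifT ?mul0r ?mulr0 ?add0r //; lia.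
  case: ifP => hs; last by rewrite addr0.
  rewrite Pshape; last by lia.
  by rewrite ifF ?mul0r ?addr0 //; apply/negbTE; lia.
rewrite big_split /= addrC; congr (_ + _).
under eq_bigr => m _ do rewrite sum_pick ?uniq_zrange //.
have h1 : (1 < L)%N by lia.
rewrite (bigD1 (Ordinal h1)) //= big1 ?addr0; last first.
  move=> m hm; rewrite Pshape; last by lia.
  rewrite ifF ?mul0r //; apply/negbTE; apply/negP => /andP[/eqP h _]; move/negP: hm; apply.
  by apply/eqP; apply: val_inj.
rewrite Pshape; last by lia.
rewrite ifT; last by apply/andP; split => //; apply/eqP; lia.
by rewrite mul1r /D big_ord1 /= subr0.
Qed.

Lemma local f g j : (forall p, j <= p -> f p = g p) -> act P f (j - 1) = act P g (j - 1).
Proof.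
move=> h; rewrite !actE; apply: eq_fsbigr => m _; apply: eq_fsbigr => s _.
have [hs|hs] := lerP j s; first by rewrite h.
rewrite Pshape; last by lia.
by rewrite ifF ?mul0r //; apply/negbTE; lia.
Qed.

Fixpoint T (n : nat) : ser K :=
  match n with
  | 0%N => scst 1
  | n'.+1 => fun p => if p == - (n'.+1)%:Z then
        - act P (T n') (- (n'.+1)%:Z - 1) / (- (n'.+1)%:Z)%:~R else T n' p
  end.

Lemma T_pos n p : 0 < p -> T n p = 0.
Proof.
elim: n => [|n IH] hp /=; first by rewrite /scst ifF //; apply/negbTE; lia.
by rewrite ifF ?IH //; apply/negbTE; lia.
Qed.

Lemma T_zero n : T n 0 = 1.
Proof.
by elim: n => [|n IH] /=; first by rewrite /scst eqxx.
Qed.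

Lemma T_low n p : p < - n%:Z -> T n p = 0.
Proof.
elim: n p => [|n IH] p hp /=; first by rewrite /scst ifF //; apply/negbTE; lia.
by rewrite ifF ?IH //; [lia | apply/negbTE; lia].
Qed.

Lemma T_mono n k p : - n%:Z <= p -> T (n + k) p = T n p.
Proof.
move=> hp; elim: k => [|k IH]; first by rewrite addn0.
by rewrite addnS /= ifF ?IH //; apply/negbTE; lia.
Qed.

Lemma T_bnd n : bnd (T n) 0.
Proof. by move=> p hp; apply: T_pos. Qed.

Lemma T_sol n : act P (T n.+1) (- (n.+1)%:Z - 1) = 0.
Proof.
set j := - (n.+1)%:Z.
rewrite (key j (T_bnd n.+1)).
have -> : trunc (T n.+1) j = trunc (T n) j.
  apply/funext => p; rewrite /trunc /=; case: ifP => // hp.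
  by rewrite ifF //; apply/negbTE; rewrite /j; lia.
have E := key j (T_bnd n).
rewrite T_low in E; last by rewrite /j; lia.
rewrite mulr0 add0r in E.
rewrite /= eqxx -/j -E.
have hj : (j%:~R : K) != 0 by rewrite intr_eq0 /j; apply/negP => /eqP; lia.
by rewrite mulrC divfK // addNr.
Qed.

Definition Psi0 : ser K := fun p => T (absz p) p.

Lemma Psi0_pos p : 0 < p -> Psi0 p = 0.
Proof. exact: T_pos. Qed.

Lemma Psi0_zero : Psi0 0 = 1.
Proof. exact: T_zero. Qed.

Lemma Psi0_bnd : bnd Psi0 0.
Proof. by move=> p hp; apply: Psi0_pos. Qed.

Lemma Psi0_T n p : - n%:Z <= p -> Psi0 p = T n p.
Proof.
move=> hp; have [hp0|hp0] := ltrP 0 p; first by rewrite Psi0_pos // T_pos.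
rewrite /Psi0 (_ : n = (absz p + (n - absz p))%N); last by lia.
by rewrite T_mono //; lia.
Qed.

Lemma Psi0_sol : act P Psi0 = (fun _ => 0).
Proof.
apply/funext => i; rewrite (_ : i = (i + 1) - 1); last by lia.
set j := i + 1.
have [hj|hj] := ltrP j 0.
  pose n := (absz j).-1.
  rewrite (local (g := T n.+1)).
    by rewrite (_ : j = - (n.+1)%:Z) ?T_sol //; rewrite /n; lia.
  by move=> p hp; apply: Psi0_T; rewrite /n; lia.
rewrite (key j Psi0_bnd).
rewrite (@act_zero P (trunc Psi0 j) (j - 1)) ?addr0; last first.
  by move=> p; rewrite /trunc; case: ifP => // hp; rewrite Psi0_pos //; lia.
have [hj0|hj0] := ltrP 0 j; first by rewrite Psi0_pos // mulr0.
by rewrite (_ : j = 0) ?mul0r //; lia.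
Qed.

Lemma Psi0_unique (Psi : ser K) : inH Psi -> act P Psi = (fun _ => 0) ->
  Psi = sscale (Psi 0) Psi0.
Proof.
move=> [N hN] hsol.
have hb : bnd Psi N by move=> p hp; apply: hN.
have pos : forall p, 0 < p -> Psi p = 0.
  suff H : forall d : nat, forall p, 0 < p -> N - d%:Z < p -> Psi p = 0.
    by move=> p hp; apply: (H (absz (N - p) + 1)%N) => //; lia.
  elim => [|d IH] p hp hpd; first by apply: hN; lia.
  have [h1|h1] := ltrP (N - d%:Z) p; first by apply: IH.
  have E := key p hb.
  rewrite hsol in E.
  rewrite (@act_zero P (trunc Psi p) (p - 1)) ?addr0 in E; last first.
    by move=> q; rewrite /trunc; case: ifP => // hq; apply: IH; lia.
  have hp0 : (p%:~R : K) != 0 by rewrite intr_eq0; apply/negP => /eqP; lia.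
  have E' : (p%:~R : K) * Psi p = 0 by rewrite -E.
  by move/eqP: E'; rewrite mulf_eq0 (negPf hp0) => /eqP.
have neg : forall n : nat, forall p, - n%:Z <= p -> Psi p = Psi 0 * Psi0 p.
  elim => [|n IH] p hp.
    have [h1|h1] := ltrP 0 p; first by rewrite pos // Psi0_pos // mulr0.
    by rewrite (_ : p = 0) ?Psi0_zero ?mulr1 //; lia.
  have [h1|h1] := ltrP p (- n%:Z); last by apply: IH.
  have -> : p = - (n.+1)%:Z by lia.
  set j := - (n.+1)%:Z.
  have hg : bnd (sscale (Psi 0) Psi0) 0.
    by move=> q hq; rewrite /sscale Psi0_pos ?mulr0.
  have E1 := key j hb; rewrite hsol in E1.
  have E2 := key j hg.
  rewrite act_scale Psi0_sol mulr0 in E2.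
  have Etr : trunc Psi j = trunc (sscale (Psi 0) Psi0) j.
    apply/funext => q; rewrite /trunc /sscale; case: ifP => // hq.
    by apply: IH; rewrite /j; lia.
  rewrite Etr in E1.
  have hj0 : (j%:~R : K) != 0 by rewrite intr_eq0 /j; apply/negP => /eqP; lia.
  apply: (mulfI hj0).
  have F1 : j%:~R * Psi j = - act P (trunc (sscale (Psi 0) Psi0) j) (j - 1).
    by apply/eqP; rewrite -addr_eq0 -E1.
  have F2 : j%:~R * sscale (Psi 0) Psi0 j = - act P (trunc (sscale (Psi 0) Psi0) j) (j - 1).
    by apply/eqP; rewrite -addr_eq0 -E2.
  by rewrite F1 -F2.
apply/funext => p; rewrite /sscale; apply: (neg (absz p)); lia.
Qed.

End Part1.


Lemma nonpos_1plus (G : op K) : inOnePlusDminus G -> nonpos G.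
Proof.
move=> hG m l hl.
have E : opone K m l = 0.
  by rewrite /opone /scst; case: (m == 0%N); rewrite ifF //; apply/negbTE; lia.
have := hG m l; rewrite /opsub /ssub E subr0; apply; lia.
Qed.

Lemma G00 (G : op K) : inOnePlusDminus G -> G 0%N 0 = 1.
Proof.
move=> hG; have := hG 0%N 0; rewrite /opsub /ssub /opone /scst /= => h.
by apply/eqP; rewrite -subr_eq0; apply/eqP; apply: h.
Qed.

Lemma nonpos_opdz : nonpos (opdz K).
Proof.
move=> m l hl; rewrite /opdz /scst; case: ifP => _; rewrite ifF //; apply/negbTE; lia.
Qed.

Lemma scst_bnd (c : K) : bnd (scst c) 0.
Proof. by move=> p hp; rewrite /scst ifF //; apply/negbTE; lia. Qed.

Lemma dz_bnd (f : ser K) N : bnd f N -> bnd (dz f) N.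
Proof. by move=> hf p hp; rewrite /dz hf ?mulr0 //; lia. Qed.

Lemma dz_scst1 : dz (scst (1 : K)) = (fun _ => 0).
Proof.
apply/funext => p; rewrite /dz /scst; case: eqP => [->|]; first by rewrite mul0r.
by rewrite mulr0.
Qed.

Lemma act_scst1_0 (G : op K) : inOnePlusDminus G -> act G (scst 1) 0 = 1.
Proof.
move=> hG; have nG := nonpos_1plus hG.
rewrite actE (fsumN (n:=1)).
  rewrite big_ord1 (fsumZ (lo:=0) (n:=1)).
    by rewrite /zrange /= big_seq1 /scst /= D0 G00 // !mul1r.
  by move=> x hx; rewrite /scst ifF ?mulr0 //; apply/negbTE; lia.
move=> m hm; rewrite fsbig1 // => s _.
rewrite /scst; case: eqP => [->|]; last by rewrite !mulr0.
by rewrite nG ?mul0r //; lia.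
Qed.

Lemma piplus_1 (f : ser K) : inOnePlusHminus f -> piplus f = scst 1.
Proof.
move=> [h0 hp]; apply/funext => n; rewrite /piplus /scst.
case: eqP => [->|hn]; first by rewrite h0.
case: ifP => // hn0; apply: hp; lia.
Qed.

End Lib.

Local Close Scope classical_set_scope.
Local Open Scope ring_scope.
Unset Implicit Arguments.
Set Strict Implicit.

Theorem mainTheorem2 (R : realType) :
  (* Part 1: for every P in d_z + z^{-1} D_-, the solutions of P . Psi = 0 in H
     form a line spanned by a (nonzero) solution Psi0 normalized in 1 + H_-. *)
  (forall P : op R[i], inDzPlusZinvDminus P ->
     exists Psi0 : ser R[i],
       [/\ inOnePlusHminus Psi0, act P Psi0 = (fun _ => 0) &
           forall Psi : ser R[i], inH Psi -> act P Psi = (fun _ => 0) ->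
             exists c : R[i], Psi = sscale c Psi0]) /\
  (* Part 2: for W in Gr^{(0)}_+, P_W . Psi = 0 has a unique solution in 1 + H_-,
     and it is the wave function, the unique element of W /\ (1 + H_-). *)
  (forall (W : ser R[i] -> Prop) (P : op R[i]), inGr0plus W -> isPW W P ->
     exists Psi0 : ser R[i],
       [/\ inOnePlusHminus Psi0, W Psi0, act P Psi0 = (fun _ => 0),
           (forall Psi, inOnePlusHminus Psi -> act P Psi = (fun _ => 0) -> Psi = Psi0) &
           (forall Psi, inOnePlusHminus Psi -> W Psi -> Psi = Psi0)]).
Proof.
split.
  move=> P hP; exists (Psi0 P); split.
  - split; first exact: Psi0_zero.
    by move=> n hn; apply: Psi0_pos.
  - exact: Psi0_sol.
  - move=> Psi hH hsol; exists (Psi 0); exact: Psi0_unique.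
move=> W P hW [G [Gi [hS hGi hGGi hGiG hPd]]].
have hG : inOnePlusDminus G := hS.1.
have nG := nonpos_1plus hG.
have nGi := nonpos_1plus hGi.
pose Ps := act G (scst 1).
have bPs : bnd Ps 0 := act_bnd nG (scst_bnd 1).
have Ps0 : Ps 0 = 1 := act_scst1_0 hG.
have PsH : inOnePlusHminus Ps by split => // n hn; apply: bPs.
have hplus : inHplus (scst (1 : R[i])).
  split; first by exists 0 => n hn; apply: scst_bnd.
  by move=> n hn; rewrite /scst ifF //; apply/negbTE; lia.
have WPs : W Ps by apply/(hS.2 Ps); exists (scst 1).
have actP : forall f N, bnd f N -> act P f = act G (dz (act Gi f)).
  move=> f N hf.
  have n1 : nonpos (Defs.comp G (opdz _)) := comp_nonpos nG (@nonpos_opdz _).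
  have bGif : bnd (act Gi f) N := act_bnd nGi hf.
  by rewrite hPd (act_comp n1 nGi hf) (act_comp nG (@nonpos_opdz _) bGif) act_opdz.
have GiG : forall f N, bnd f N -> act Gi (act G f) = f.
  by move=> f N hf; rewrite -(act_comp nGi nG hf) hGiG act_opone.
have GGi : forall f N, bnd f N -> act G (act Gi f) = f.
  by move=> f N hf; rewrite -(act_comp nG nGi hf) hGGi act_opone.
exists Ps; split => //.
- rewrite (actP Ps 0 bPs) (GiG _ 0 (scst_bnd 1)) dz_scst1.
  by apply/funext => j; apply: act_zero.
- move=> Psi [h0 hpos] hsol.
  have bPsi : bnd Psi 0 by move=> p hp; apply: hpos.
  pose phi := act Gi Psi.
  have bphi : bnd phi 0 := act_bnd nGi bPsi.
  rewrite (actP Psi 0 bPsi) -/phi in hsol.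
  have hdz : forall p, dz phi p = 0.
    move=> p; rewrite -(GiG _ 0 (dz_bnd bphi)) hsol.
    by apply: act_zero.
  have Ephi : phi = sscale (phi 0) (scst 1).
    apply/funext => p; rewrite /sscale /scst; case: eqP => [->|hp]; first by rewrite mulr1.
    have := hdz (p - 1); rewrite /dz (_ : p - 1 + 1 = p); last by lia.
    move/eqP; rewrite mulf_eq0 intr_eq0 (_ : (p == 0) = false) /=; last by apply/negbTE/eqP.
    by rewrite mulr0 => /eqP.
  have EPsi : Psi = act G phi by rewrite (GGi _ 0 bPsi).
  have Ec : phi 0 = 1.
    have := f_equal (fun g => g 0) EPsi; rewrite /= Ephi act_scale -/Ps Ps0 h0 mulr1.
    by move=> h; rewrite /sscale /scst eqxx mulr1 -h.
  rewrite EPsi Ephi Ec; apply/funext => j.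
  by rewrite act_scale mul1r.
- move=> Psi hPsi hWPsi.
  have [_ [_ [_ [_ [_ hu]]]]] := hW.
  have [w [_ [_ huniq]]] := hu _ hplus.
  rewrite (huniq Psi hWPsi (piplus_1 hPsi)).
  by rewrite (huniq Ps WPs (piplus_1 PsH)).
Qed.
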